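(* Let $G$ be a dense $K_4^3\cup e$-free $3$-graph with $\lambda(G)>\frac{\sqrt3}{18}$. Then $G$ has at least $8$ vertices.
   Context: $K_4^3\cup e$ is the $3$-graph on $\{1,\dots,7\}$ with edges $\{123,124,134,234,567\}$. For a $3$-graph $G$ on $[n]$, $\lambda(G)=\max\{\sum_{e\in E(G)}\prod_{i\in e}x_i:\sum_ix_i=1,x_i\ge0\}$. An $r$-graph $G$ is dense if $\lambda(G')<\lambda(G)$ for every proper subgraph $G'$ of $G$. *)

(* Defs.v *)
From HB Require Import structures.
From mathcomp Require Import all_boot all_order all_algebra.
From mathcomp Require Import classical_sets reals.
Set Implicit Arguments. Unset Strict Implicit. Unset Printing Implicit Defensive.
Import Order.TTheory GRing.Theory Num.Theory.
Local Open Scope ring_scope.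


Definition is_3graph (n : nat) (E : {set {set 'I_n}}) : Prop :=
  forall e, e \in E -> #|e| = 3%N.

Definition lag_poly (R : realType) (n : nat) (E : {set {set 'I_n}})
  (x : 'I_n -> R) : R := \sum_(e in E) \prod_(i in e) x i.

Definition simplex_on (R : realType) (n : nat) (V : {set 'I_n})
  (x : 'I_n -> R) : Prop :=
  (forall i, 0 <= x i) /\ (forall i, i \notin V -> x i = 0) /\
  \sum_(i < n) x i = 1.

(* Lagrangian of the 3-graph (V, E): the maximum (= supremum, it is attained
   by compactness) of w_E over the simplex on V. *)
Definition lagrangian_on (R : realType) (n : nat) (V : {set 'I_n})
  (E : {set {set 'I_n}}) : R :=
  sup [set lag_poly E x | x in @simplex_on R n V]%classic.

Definition lagrangian (R : realType) (n : nat) (E : {set {set 'I_n}}) : R :=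
  @lagrangian_on R n (finset.setT : {set 'I_n}) E.

Definition dense (R : realType) (n : nat) (E : {set {set 'I_n}}) : Prop :=
  forall (V' : {set 'I_n}) (E' : {set {set 'I_n}}),
    E' \subset E -> (forall e, e \in E' -> e \subset V') ->
    (V' != (finset.setT : {set 'I_n})) || (E' != E) ->
    @lagrangian_on R n V' E' < @lagrangian R n E.

Definition K43e : {set {set 'I_7}} :=
  [set [set (inord 0 : 'I_7); inord 1; inord 2];
       [set (inord 0 : 'I_7); inord 1; inord 3];
       [set (inord 0 : 'I_7); inord 2; inord 3];
       [set (inord 1 : 'I_7); inord 2; inord 3];
       [set (inord 4 : 'I_7); inord 5; inord 6]].

Definition contains_copy (m n : nat) (F : {set {set 'I_m}})
  (E : {set {set 'I_n}}) : Prop :=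
  exists f : 'I_m -> 'I_n, injective f /\ forall e, e \in F -> f @: e \in E.

Definition K43e_free (n : nat) (E : {set {set 'I_n}}) : Prop :=
  ~ contains_copy K43e E.

(* Main.v *)
Require Import Defs.
From HB Require Import structures.
From mathcomp Require Import all_boot all_order all_algebra.
From mathcomp Require Import classical_sets reals.
From mathcomp Require Import fingroup perm boolp.
From mathcomp Require Import zify ring lra.
Import Order.TTheory GRing.Theory Num.Theory.
Local Open Scope ring_scope.

Module Aux.
Set Implicit Arguments. Unset Strict Implicit. Unset Printing Implicit Defensive.
Lemma q1 (R : realFieldType) (a v w : R) :
  0 <= 17/3 * a^+2 - 4/3 * a*v - 5/3 *a*w + 1/6 * w^+2 + 2/3*v*w + 5/3 * v^+2.
Proof.
have e: (17/3 * a^+2 - 4/3 * a*v - 5/3 *a*w + 1/6 * w^+2 + 2/3*v*w + 5/3 * v^+2 = 1/6*(w+2*v-5*a)^+2 + (v+a)^+2 + a^+2/2) by field.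
rewrite e; have h1 := sqr_ge0 (w+2*v-5*a); have h2 := sqr_ge0 (v+a); have h3 := sqr_ge0 a; lra.
Qed.

Lemma c1 (R : realFieldType) (a v w : R) :
  0 <= a -> 0 <= v -> 0 <= w ->
  0 <= 13/432 * w^+3 + 19/72 * v * w^+2 + 17/18 * v^+2 * w + 85/54 * v^+3 
   + 203/54*a^+3 + a^+2*(1/18*v - 25/18*w) + a*(- 25/18*v^+2 - 5/9*v*w + 5/72*w^+2).
Proof. move=> ha hv hw.
have h1 := mulr_ge0 ha (sqr_ge0 (19/10*a - 4/10*w)).
have h2 := mulr_ge0 hw (sqr_ge0 (3/10*a - 1/6*w)).
have h3 := mulr_ge0 (addr_ge0 ha hv) (sqr_ge0 (a - v)).
have h4 := mulr_ge0 hv (sqr_ge0 (a - w)).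
have h5 := mulr_ge0 hv (sqr_ge0 (v - a)).
have h6 := mulr_ge0 (mulr_ge0 ha hv) hw.
have h7 := mulr_ge0 ha (sqr_ge0 (v - w)).
have h8 := mulr_ge0 hw (sqr_ge0 (v - a)).
have h9 := mulr_ge0 hv (sqr_ge0 (w - 2 * a)).
nra. Qed.

Lemma gb (R : realFieldType) (a b c S : R) :
  0 <= a -> a <= b -> b <= c -> 4 * c <= S -> a + b + c + S = 1 ->
  S^+3/16 + 3/8*(a+b+c)*S^+2 + (a*b+b*c+c*a)*S - 6*a*b*c <= 5/54.
Proof.
move=> ha hab hbc hc hS.
pose u := b - a; pose v := c - b; pose w := S - 4 * c.
have hu : 0 <= u by rewrite /u subr_ge0.
have hv : 0 <= v by rewrite /v subr_ge0.
have hw : 0 <= w by rewrite /w subr_ge0.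
have eb : b = a + u by rewrite /u; ring.
have ec : c = a + u + v by rewrite /u /v; ring.
have eS : S = 1 - 3*a - 2*u - v by rewrite /u /v; lra.
have ew : w = 1 - 7*a - 6*u - 5*v by rewrite /w eS ec; ring.
have Q := q1 a v w.
have C := c1 ha hv hw.
have P1 := mulr_ge0 hu Q.
have P2 := mulr_ge0 (mulr_ge0 hu hu) ha.
rewrite eS eb ec.
rewrite ew in P1 C.
nra.
Qed.

Lemma core7 (R : realFieldType) (y0 y1 y2 y3 y4 y5 y6 : R) :
  0 <= y0 -> y0 <= y1 -> y1 <= y2 -> y2 <= y3 -> y2 <= y4 -> y2 <= y5 -> y2 <= y6 ->
  y0 + y1 + y2 + y3 + y4 + y5 + y6 = 1 ->
  (y0*y1*y2 + y0*y1*y3 + y0*y1*y4 + y0*y1*y5 + y0*y1*y6 + y0*y2*y3 + y0*y2*y4 + y0*y2*y5 + y0*y2*y6 + y0*y3*y4 + y0*y3*y5 + y0*y3*y6 + y0*y4*y5 + y0*y4*y6 + y0*y5*y6 + y1*y2*y3 + y1*y2*y4 + y1*y2*y5 + y1*y2*y6 + y1*y3*y4 + y1*y3*y5 + y1*y3*y6 + y1*y4*y5 + y1*y4*y6 + y1*y5*y6 + y2*y3*y4 + y2*y3*y5 + y2*y3*y6 + y2*y4*y5 + y2*y4*y6 + y2*y5*y6 + y3*y4*y5 + y3*y4*y6 + y3*y5*y6 + y4*y5*y6) - 7 * (y0 * y1 * y2) <= 5/54.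
Proof.
move=> h0 h01 h12 h3 h4 h5 h6 hs.
have n3 : 0 <= y3 by lra.
have n4 : 0 <= y4 by lra.
have n5 : 0 <= y5 by lra.
have n6 : 0 <= y6 by lra.
have id : (y0*y1*y2 + y0*y1*y3 + y0*y1*y4 + y0*y1*y5 + y0*y1*y6 + y0*y2*y3 + y0*y2*y4 + y0*y2*y5 + y0*y2*y6 + y0*y3*y4 + y0*y3*y5 + y0*y3*y6 + y0*y4*y5 + y0*y4*y6 + y0*y5*y6 + y1*y2*y3 + y1*y2*y4 + y1*y2*y5 + y1*y2*y6 + y1*y3*y4 + y1*y3*y5 + y1*y3*y6 + y1*y4*y5 + y1*y4*y6 + y1*y5*y6 + y2*y3*y4 + y2*y3*y5 + y2*y3*y6 + y2*y4*y5 + y2*y4*y6 + y2*y5*y6 + y3*y4*y5 + y3*y4*y6 + y3*y5*y6 + y4*y5*y6) = (y3*y4*y5 + y3*y4*y6 + y3*y5*y6 + y4*y5*y6) + (y0+y1+y2)*(y3*y4 + y3*y5 + y3*y6 + y4*y5 + y4*y6 + y5*y6) + (y0*y1+y1*y2+y2*y0)*(y3 + y4 + y5 + y6) + y0*y1*y2 by ring.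
have hC : 6 * (y3*y4*y5 + y3*y4*y6 + y3*y5*y6 + y4*y5*y6) <= (y3 + y4 + y5 + y6) * (y3*y4 + y3*y5 + y3*y6 + y4*y5 + y4*y6 + y5*y6).
  have e : (y3 + y4 + y5 + y6) * (y3*y4 + y3*y5 + y3*y6 + y4*y5 + y4*y6 + y5*y6) - 6 * (y3*y4*y5 + y3*y4*y6 + y3*y5*y6 + y4*y5*y6) = (y3 * ((y4-y5)^+2 + (y4-y6)^+2 + (y5-y6)^+2) + y4 * ((y3-y5)^+2 + (y3-y6)^+2 + (y5-y6)^+2)
     + y5 * ((y3-y4)^+2 + (y3-y6)^+2 + (y4-y6)^+2) + y6 * ((y3-y4)^+2 + (y3-y5)^+2 + (y4-y5)^+2)) / 2
     by field.
  rewrite -subr_ge0 e; apply: divr_ge0 => //.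
  by rewrite !addr_ge0 // mulr_ge0 // !addr_ge0 // sqr_ge0.
have hQ : 8 * (y3*y4 + y3*y5 + y3*y6 + y4*y5 + y4*y6 + y5*y6) <= 3 * (y3 + y4 + y5 + y6)^+2.
  have e : 3 * (y3 + y4 + y5 + y6)^+2 - 8 * (y3*y4 + y3*y5 + y3*y6 + y4*y5 + y4*y6 + y5*y6) = (y3-y4)^+2 + (y3-y5)^+2 + (y3-y6)^+2 + (y4-y5)^+2 + (y4-y6)^+2 + (y5-y6)^+2
     by ring.
  by rewrite -subr_ge0 e !addr_ge0 // sqr_ge0.
have hS4 : 4 * y2 <= (y3 + y4 + y5 + y6) by lra.
have hsum : y0 + y1 + y2 + (y3 + y4 + y5 + y6) = 1 by lra.
have G := gb h0 h01 h12 hS4 hsum.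
have hS : 0 <= (y3 + y4 + y5 + y6) by lra.
have hf : 0 <= (y3 + y4 + y5 + y6) / 6 + (y0 + y1 + y2) by lra.
have M := ler_wpM2r hf hQ.
rewrite id.
nra.
Qed.

Section S3.
Variable (n : nat).
Definition s3 (t : 'I_n * 'I_n * 'I_n) : {set 'I_n} := [set t.1.1; t.1.2; t.2].
Definition srt (t : 'I_n * 'I_n * 'I_n) : bool := (t.1.1 < t.1.2)%N && (t.1.2 < t.2)%N.

Lemma in_s3_bounds t u : srt t -> u \in s3 t -> (t.1.1 <= u)%N && (u <= t.2)%N.
Proof.
case: t => [[i j] k]; rewrite /srt /s3 /= => /andP[hij hjk].
have hik : (i < k)%N := ltn_trans hij hjk.
rewrite !inE => /orP[/orP[/eqP->|/eqP->]|/eqP->]; apply/andP; split => //.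
- exact: ltnW.
- exact: ltnW.
- exact: ltnW.
- exact: ltnW.
Qed.
Lemma s3_inj t t' : srt t -> srt t' -> s3 t = s3 t' -> t = t'.
Proof.
move=> ht ht' e.
case: t ht e => [[i j] k] ht; case: t' ht' => [[i' j'] k'] ht' e.
have mi : i \in s3 (i', j', k') by rewrite -e /s3 !inE eqxx.
have mj : j \in s3 (i', j', k') by rewrite -e /s3 !inE eqxx ?orbT.
have mk : k \in s3 (i', j', k') by rewrite -e /s3 !inE eqxx ?orbT.
have mi' : i' \in s3 (i, j, k) by rewrite e /s3 !inE eqxx.
have mk' : k' \in s3 (i, j, k) by rewrite e /s3 !inE eqxx ?orbT.
have /andP[b1 _] := in_s3_bounds ht' mi.
have /andP[b2 _] := in_s3_bounds ht mi'.
have /andP[_ b3] := in_s3_bounds ht' mk.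
have /andP[_ b4] := in_s3_bounds ht mk'.
have eii : i = i' by apply/val_inj/eqP; rewrite eqn_leq b1 b2.
have ekk : k = k' by apply/val_inj/eqP; rewrite eqn_leq b3 b4.
subst i' k'.
move: ht ht' mj; rewrite /srt /s3 /= !inE => /andP[h1 h2] /andP[h3 h4].
case/orP=> [/orP[/eqP hj|/eqP hj]|/eqP hj]; subst.
- by rewrite ltnn in h1.
- by [].
- by rewrite ltnn in h2.
Qed.

Lemma card3_s3 (e : {set 'I_n}) : #|e| = 3%N -> exists t, srt t /\ s3 t = e.
Proof.
move=> he.
have : size (enum e) = 3%N by rewrite -cardE.
have u := enum_uniq e.
have se : e = [set x | x \in enum e] by rewrite set_enum.
case E: (enum e) u => [|x [|y [|z [|w s]]]] //= u _.
move: u; rewrite !inE !andbT => /andP[/norP[hxy hxz] hyz].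
have ee : e = [set x; y; z].
  by apply/setP=> v; rewrite -mem_enum E !inE ?orbA.
rewrite ee.
have ne : forall a b : 'I_n, a != b -> (a < b)%N \/ (b < a)%N.
  move=> a b /eqP hab; case: (ltngtP a b) => //; [by left|by right|].
  by move=> h; exfalso; apply: hab; apply: val_inj.
case: (ne _ _ hxy) => h1; case: (ne _ _ hxz) => h2; case: (ne _ _ hyz) => h3.
- exists (x, y, z); split; first by rewrite /srt /= h1 h3.
  by [].
- exists (x, z, y); split; first by rewrite /srt /= h2 h3.
  by apply/setP=> v; rewrite /s3 !inE /=; by case: (v == x); case: (v == y); case: (v == z).
- have : (x < x)%N by apply: ltn_trans h1 (ltn_trans h3 h2).
  by rewrite ltnn.
- exists (z, x, y); split; first by rewrite /srt /= h2 h1.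
  by apply/setP=> v; rewrite /s3 !inE /=; by case: (v == x); case: (v == y); case: (v == z).
- exists (y, x, z); split; first by rewrite /srt /= h1 h2.
  by apply/setP=> v; rewrite /s3 !inE /=; by case: (v == x); case: (v == y); case: (v == z).
- have : (x < x)%N by apply: ltn_trans h2 (ltn_trans h3 h1).
  by rewrite ltnn.
- exists (y, z, x); split; first by rewrite /srt /= h3 h2.
  by apply/setP=> v; rewrite /s3 !inE /=; by case: (v == x); case: (v == y); case: (v == z).
- exists (z, y, x); split; first by rewrite /srt /= h3 h1.
  by apply/setP=> v; rewrite /s3 !inE /=; by case: (v == x); case: (v == y); case: (v == z).
Qed.

Lemma sum3_ord (E : {set {set 'I_n}}) (R : nmodType) (F : {set 'I_n} -> R) :
  is_3graph E ->
  \sum_(e in E) F e =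
  \sum_(i : 'I_n) \sum_(j : 'I_n) \sum_(k : 'I_n) (if ((i < j)%N && (j < k)%N) && ([set i; j; k] \in E)
                        then F [set i; j; k] else 0).
Proof.
move=> h3.
have -> : \sum_(i : 'I_n) \sum_(j : 'I_n) \sum_(k : 'I_n) (if ((i < j)%N && (j < k)%N) && ([set i; j; k] \in E)
                        then F [set i; j; k] else 0) =
  \sum_(t : 'I_n * 'I_n * 'I_n) (if srt t && (s3 t \in E) then F (s3 t) else 0).
  rewrite pair_big pair_big /=; by apply: eq_bigr => -[[i j] k] _.
rewrite (eq_bigr (fun t => \sum_(e in E) (if srt t && (s3 t == e) then F e else 0))); last first.
  move=> t _; case: (boolP (srt t)) => st /=; last by rewrite big1.
  case: (boolP (s3 t \in E)) => se.
    rewrite (bigD1 (s3 t)) //= eqxx big1 ?addr0 // => e /andP[_ /negPf].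
    by rewrite eq_sym => ->.
  by rewrite big1 // => e ee; case: eqP => // ex; rewrite ex ee in se.
rewrite exchange_big /=; apply: eq_bigr => e ee.
have [t [st se]] := card3_s3 (h3 _ ee).
rewrite (bigD1 t) //= st se eqxx big1 ?addr0 // => t' nt.
case: (boolP (srt t')) => st' //=; case: eqP => // e'.
by case/eqP: nt; apply: s3_inj st' st _; rewrite e' se.
Qed.
End S3.

Lemma sum_shift (R : nmodType) (a N : nat) (X : nat -> R) :
  \sum_(0 <= j < N) (if (a <= j)%N then X j else 0) = \sum_(a <= j < N) X j.
Proof.
case: (leqP a N) => h.
  rewrite (big_cat_nat (n:=a)) //= big_nat_cond big1 ?add0r; last first.
    by move=> j /andP[/andP[_ hj] _]; rewrite leqNgt hj.
  rewrite [LHS]big_nat_cond [RHS]big_nat_cond.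
  by apply: eq_bigr => j /andP[/andP[hj _] _]; rewrite hj.
rewrite [RHS]big_geq; last exact: ltnW.
rewrite big_nat_cond big1 // => j /andP[/andP[_ hj] _].
by rewrite leqNgt (ltn_trans hj h).
Qed.

Lemma sum3_nat (m : nat) (E : {set {set 'I_m.+1}}) (R : nmodType) (F : {set 'I_m.+1} -> R) :
  is_3graph E ->
  \sum_(e in E) F e =
  \sum_(0 <= i < m.+1) \sum_(i.+1 <= j < m.+1) \sum_(j.+1 <= k < m.+1)
     (if [set inord i; inord j; inord k] \in E then F [set inord i; inord j; inord k] else 0).
Proof.
move=> h3; rewrite sum3_ord //.
symmetry; rewrite big_mkord; apply: eq_bigr => i _.
rewrite -sum_shift big_mkord; apply: eq_bigr => j _.
case: (ltnP i j) => hij; last first.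
  by rewrite big1 // => k _; rewrite ltnNge hij.
rewrite -sum_shift big_mkord; apply: eq_bigr => k _.
by rewrite !inord_val /=; case: (j < k)%N.
Qed.

Lemma prod3 (T : finType) (R : comRingType) (F : T -> R) (a b c : T) :
  a != b -> a != c -> b != c -> \prod_(l in [set a; b; c]) F l = F a * F b * F c.
Proof.
move=> hab hac hbc.
have -> : [set a; b; c] = a |: (b |: [set c]) by apply/setP => l; rewrite !inE orbA.
rewrite big_setU1 /=; last by rewrite !inE negb_or hab hac.
by rewrite big_setU1 /= ?big_set1 ?inE // mulrA.
Qed.

Lemma inord_neq (m a b : nat) : (a < b)%N -> (b < m.+1)%N -> (inord a : 'I_m.+1) != inord b.
Proof.
move=> hab hb; apply/eqP => /(congr1 (@nat_of_ord _)); rewrite !inordK ?(ltn_trans hab hb) //.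
by move=> e; rewrite e ltnn in hab.
Qed.

Lemma lag_nat (R : realType) (m : nat) (E : {set {set 'I_m.+1}}) (x : 'I_m.+1 -> R) :
  is_3graph E ->
  lag_poly E x =
  \sum_(0 <= i < m.+1) \sum_(i.+1 <= j < m.+1) \sum_(j.+1 <= k < m.+1)
     (([set inord i; inord j; inord k] \in E : nat)%:R * (x (inord i) * x (inord j) * x (inord k))).
Proof.
move=> h3; rewrite /lag_poly (sum3_nat _ h3).
apply: eq_big_nat => i /andP[_ hi]; apply: eq_big_nat => j /andP[hij hj].
apply: eq_big_nat => k /andP[hjk hk]; case: ifP => _ /=; rewrite ?mul1r ?mul0r //.
by apply: prod3; apply: inord_neq => //; exact: (ltn_trans hij hjk).
Qed.

Lemma card_nat (m : nat) (E : {set {set 'I_m.+1}}) :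
  is_3graph E ->
  #|E| =
  (\sum_(0 <= i < m.+1) \sum_(i.+1 <= j < m.+1) \sum_(j.+1 <= k < m.+1)
     ([set inord i; inord j; inord k] \in E : nat))%N.
Proof.
move=> h3; rewrite -sum1_card (sum3_nat _ h3).
apply: eq_big_nat => i _; apply: eq_big_nat => j _; apply: eq_big_nat => k _.
by case: ifP.
Qed.


Lemma imset3 (T T' : finType) (f : T -> T') (a b c : T) :
  f @: [set a; b; c] = [set f a; f b; f c].
Proof. by rewrite !imsetU !imset_set1. Qed.

Lemma copy7 (n : nat) (E : {set {set 'I_n}}) (p q r s u v w : 'I_n) :
  uniq [:: p; q; r; s; u; v; w] ->
  [set p; q; r] \in E -> [set p; q; s] \in E -> [set p; r; s] \in E ->
  [set q; r; s] \in E -> [set u; v; w] \in E -> contains_copy K43e E.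
Proof.
move=> hu e1 e2 e3 e4 e5.
pose L := [:: p; q; r; s; u; v; w].
pose f := fun i : 'I_7 => nth p L i.
have fE : forall k, (k < 7)%N -> f (inord k) = nth p L k.
  by move=> k hk; rewrite /f inordK.
exists f; split.
  move=> i j; rewrite /f => /eqP; rewrite nth_uniq // => /eqP; exact: val_inj.
move=> e; rewrite /K43e !inE => /orP[/orP[/orP[/orP[|]|]|]|] /eqP ->;
  rewrite imset3 !fE //.
Qed.

Lemma uniq_inord (m : nat) (l : seq nat) :
  uniq l -> all (fun k => (k < m.+1)%N) l -> uniq (map (@inord m) l).
Proof.
move=> hu ha; rewrite map_inj_in_uniq // => a b /(allP ha) ha' /(allP ha) hb.
by move/(congr1 (@nat_of_ord _)); rewrite !inordK.
Qed.

Lemma clause5 (b1 b2 b3 b4 b5 : bool) :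
  ~~ [&& b1, b2, b3, b4 & b5] -> (b1 + b2 + b3 + b4 + b5 <= 4)%N.
Proof. by case: b1; case: b2; case: b3; case: b4; case: b5. Qed.

Lemma K43e_card (E : {set {set 'I_7}}) : is_3graph E -> K43e_free E -> (#|E| <= 28)%N.
Proof.
move=> h3 hf.
have cl : forall p q r s u v w : nat,
  uniq [:: p; q; r; s; u; v; w] -> all (fun k => (k < 7)%N) [:: p; q; r; s; u; v; w] ->
  (([set inord p; inord q; inord r] \in E) + ([set inord p; inord q; inord s] \in E) +
   ([set inord p; inord r; inord s] \in E) + ([set inord q; inord r; inord s] \in E) +
   ([set inord u; inord v; inord w] \in E) <= 4)%N.
  move=> p q r s u v w hu ha; apply: clause5; apply/negP => /and5P[e1 e2 e3 e4 e5].
  apply: hf; apply: (copy7 _ e1 e2 e3 e4 e5).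
  exact: (@uniq_inord 6 [:: p; q; r; s; u; v; w]).
have c0 := cl 0 1 2 3 4 5 6 erefl erefl.
have c1 := cl 0 1 2 4 3 5 6 erefl erefl.
have c2 := cl 0 1 2 5 3 4 6 erefl erefl.
have c3 := cl 0 1 2 6 3 4 5 erefl erefl.
have c4 := cl 0 1 3 4 2 5 6 erefl erefl.
have c5 := cl 0 1 3 5 2 4 6 erefl erefl.
have c6 := cl 0 1 3 6 2 4 5 erefl erefl.
have c7 := cl 0 1 4 5 2 3 6 erefl erefl.
have c8 := cl 0 1 4 6 2 3 5 erefl erefl.
have c9 := cl 0 1 5 6 2 3 4 erefl erefl.
have c10 := cl 0 2 3 4 1 5 6 erefl erefl.
have c11 := cl 0 2 3 5 1 4 6 erefl erefl.
have c12 := cl 0 2 3 6 1 4 5 erefl erefl.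
have c13 := cl 0 2 4 5 1 3 6 erefl erefl.
have c14 := cl 0 2 4 6 1 3 5 erefl erefl.
have c15 := cl 0 2 5 6 1 3 4 erefl erefl.
have c16 := cl 0 3 4 5 1 2 6 erefl erefl.
have c17 := cl 0 3 4 6 1 2 5 erefl erefl.
have c18 := cl 0 3 5 6 1 2 4 erefl erefl.
have c19 := cl 0 4 5 6 1 2 3 erefl erefl.
have c20 := cl 1 2 3 4 0 5 6 erefl erefl.
have c21 := cl 1 2 3 5 0 4 6 erefl erefl.
have c22 := cl 1 2 3 6 0 4 5 erefl erefl.
have c23 := cl 1 2 4 5 0 3 6 erefl erefl.
have c24 := cl 1 2 4 6 0 3 5 erefl erefl.
have c25 := cl 1 2 5 6 0 3 4 erefl erefl.
have c26 := cl 1 3 4 5 0 2 6 erefl erefl.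
have c27 := cl 1 3 4 6 0 2 5 erefl erefl.
have c28 := cl 1 3 5 6 0 2 4 erefl erefl.
have c29 := cl 1 4 5 6 0 2 3 erefl erefl.
have c30 := cl 2 3 4 5 0 1 6 erefl erefl.
have c31 := cl 2 3 4 6 0 1 5 erefl erefl.
have c32 := cl 2 3 5 6 0 1 4 erefl erefl.
have c33 := cl 2 4 5 6 0 1 3 erefl erefl.
have c34 := cl 3 4 5 6 0 1 2 erefl erefl.
Time rewrite card_nat // /index_iota /= !big_cons !big_nil /=.
move: c0 c1 c2 c3 c4 c5 c6 c7 c8 c9 c10 c11 c12 c13 c14 c15 c16 c17 c18 c19 c20 c21 c22 c23 c24 c25 c26 c27 c28 c29 c30 c31 c32 c33 c34.
move: (nat_of_bool ([set inord 0; inord 1; inord 2] \in E)) => x012.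
move: (nat_of_bool ([set inord 0; inord 1; inord 3] \in E)) => x013.
move: (nat_of_bool ([set inord 0; inord 1; inord 4] \in E)) => x014.
move: (nat_of_bool ([set inord 0; inord 1; inord 5] \in E)) => x015.
move: (nat_of_bool ([set inord 0; inord 1; inord 6] \in E)) => x016.
move: (nat_of_bool ([set inord 0; inord 2; inord 3] \in E)) => x023.
move: (nat_of_bool ([set inord 0; inord 2; inord 4] \in E)) => x024.
move: (nat_of_bool ([set inord 0; inord 2; inord 5] \in E)) => x025.
move: (nat_of_bool ([set inord 0; inord 2; inord 6] \in E)) => x026.
move: (nat_of_bool ([set inord 0; inord 3; inord 4] \in E)) => x034.
move: (nat_of_bool ([set inord 0; inord 3; inord 5] \in E)) => x035.
move: (nat_of_bool ([set inord 0; inord 3; inord 6] \in E)) => x036.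
move: (nat_of_bool ([set inord 0; inord 4; inord 5] \in E)) => x045.
move: (nat_of_bool ([set inord 0; inord 4; inord 6] \in E)) => x046.
move: (nat_of_bool ([set inord 0; inord 5; inord 6] \in E)) => x056.
move: (nat_of_bool ([set inord 1; inord 2; inord 3] \in E)) => x123.
move: (nat_of_bool ([set inord 1; inord 2; inord 4] \in E)) => x124.
move: (nat_of_bool ([set inord 1; inord 2; inord 5] \in E)) => x125.
move: (nat_of_bool ([set inord 1; inord 2; inord 6] \in E)) => x126.
move: (nat_of_bool ([set inord 1; inord 3; inord 4] \in E)) => x134.
move: (nat_of_bool ([set inord 1; inord 3; inord 5] \in E)) => x135.
move: (nat_of_bool ([set inord 1; inord 3; inord 6] \in E)) => x136.
move: (nat_of_bool ([set inord 1; inord 4; inord 5] \in E)) => x145.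
move: (nat_of_bool ([set inord 1; inord 4; inord 6] \in E)) => x146.
move: (nat_of_bool ([set inord 1; inord 5; inord 6] \in E)) => x156.
move: (nat_of_bool ([set inord 2; inord 3; inord 4] \in E)) => x234.
move: (nat_of_bool ([set inord 2; inord 3; inord 5] \in E)) => x235.
move: (nat_of_bool ([set inord 2; inord 3; inord 6] \in E)) => x236.
move: (nat_of_bool ([set inord 2; inord 4; inord 5] \in E)) => x245.
move: (nat_of_bool ([set inord 2; inord 4; inord 6] \in E)) => x246.
move: (nat_of_bool ([set inord 2; inord 5; inord 6] \in E)) => x256.
move: (nat_of_bool ([set inord 3; inord 4; inord 5] \in E)) => x345.
move: (nat_of_bool ([set inord 3; inord 4; inord 6] \in E)) => x346.
move: (nat_of_bool ([set inord 3; inord 5; inord 6] \in E)) => x356.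
move: (nat_of_bool ([set inord 4; inord 5; inord 6] \in E)) => x456.
move=> c0 c1 c2 c3 c4 c5 c6 c7 c8 c9 c10 c11 c12 c13 c14 c15 c16 c17 c18 c19 c20 c21 c22 c23 c24 c25 c26 c27 c28 c29 c30 c31 c32 c33 c34.
Time lia.
Qed.

Definition relab n (s : {perm 'I_n}) (E : {set {set 'I_n}}) : {set {set 'I_n}} :=
  (fun e : {set 'I_n} => (s^-1)%g @: e) @: E.

Lemma relabel (R : realType) n (E : {set {set 'I_n}}) (x : 'I_n -> R) (s : {perm 'I_n}) :
  lag_poly E x = lag_poly (relab s E) (fun i => x (s i)) /\
  #|(relab s E)| = #|E| /\
  (is_3graph E -> is_3graph (relab s E)).
Proof.
have inj : injective (fun e : {set 'I_n} => (s^-1)%g @: e) by apply: imset_inj; exact: perm_inj.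
rewrite /relab; split; last split.
- rewrite /lag_poly big_imset /=; last by move=> ? ? _ _; exact: inj.
  apply: eq_bigr => e _; rewrite big_imset /=; last by move=> ? ? _ _; exact: perm_inj.
  by apply: eq_bigr => i _; rewrite permKV.
- exact: card_imset.
- move=> h3 e' /imsetP[e he ->]; rewrite card_imset; [exact: h3|exact: perm_inj].
Qed.

Lemma sort_perm (R : realType) n (x : 'I_n -> R) :
  exists s : {perm 'I_n}, forall i j : 'I_n, (i <= j)%N -> x (s i) <= x (s j).
Proof.
case: n x => [|m] x.
  by exists 1%g => -[].
pose leT := fun i j : 'I_m.+1 => x i <= x j.
pose sq := sort leT (enum 'I_m.+1).
have hsz : size sq = m.+1 by rewrite size_sort size_enum_ord.
have hu : uniq sq by rewrite sort_uniq enum_uniq.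
have hs : sorted leT sq by apply: sort_sorted => i j; exact: le_total.
pose f := fun i : 'I_m.+1 => nth ord0 sq i.
have finj : injective f.
  move=> i j; rewrite /f => /eqP; rewrite nth_uniq ?hsz // => /eqP; exact: val_inj.
exists (perm finj) => i j hij; rewrite !permE /f.
have tr : transitive leT by move=> a b c; rewrite /leT; exact: le_trans.
have rf : reflexive leT by move=> a; rewrite /leT.
by apply: (sorted_leq_nth tr rf) => //; rewrite inE hsz.
Qed.

Lemma ifE (R : realType) (b : bool) (p : R) : (if b then p else 0) = (b : nat)%:R * p.
Proof. by case: b; rewrite ?mul1r ?mul0r. Qed.

Lemma sum_inord (R : realType) m (y : 'I_m.+1 -> R) :
  \sum_(i < m.+1) y i = \sum_(0 <= i < m.+1) y (inord i).
Proof. by rewrite big_mkord; apply: eq_bigr => i _; rewrite inord_val. Qed.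

Lemma mono_inord (R : realType) m (y : 'I_m.+1 -> R) :
  (forall i j : 'I_m.+1, (i <= j)%N -> y i <= y j) ->
  forall k l : nat, (k <= l)%N -> (l < m.+1)%N -> y (inord k) <= y (inord l).
Proof.
move=> h k l hkl hl; apply: h; rewrite !inordK //; exact: leq_ltn_trans hkl hl.
Qed.

Lemma term_fact (R : realType) (b : bool) (y0 y1 y2 ya yb yc : R) :
  0 <= y0 -> y0 <= ya -> 0 <= y1 -> y1 <= yb -> 0 <= y2 -> y2 <= yc ->
  0 <= (1 - (b : nat)%:R) * (ya * yb * yc - y0 * y1 * y2).
Proof.
move=> h0 ha h1 hb h2 hc; apply: mulr_ge0; first by case: b; rewrite /= ?subrr ?subr0.
rewrite subr_ge0; apply: ler_pM; [| |apply: ler_pM|] => //; exact: mulr_ge0.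
Qed.

Lemma term_fact0 (R : realType) (b : bool) (ya yb yc : R) :
  0 <= ya -> 0 <= yb -> 0 <= yc -> 0 <= (1 - (b : nat)%:R) * (ya * yb * yc).
Proof.
move=> ha hb hc; apply: mulr_ge0; first by case: b; rewrite /= ?subrr ?subr0.
by rewrite !mulr_ge0.
Qed.

Lemma mul_le28 (R : realType) (s m : R) : s <= 28 -> 0 <= m -> s * m <= 28 * m.
Proof. by move=> hs hm; apply: ler_wpM2r. Qed.

Lemma bool_le1 (R : realType) (b : bool) : 0 <= (b : nat)%:R :> R /\ (b : nat)%:R <= 1 :> R.
Proof. by case: b. Qed.


Lemma core (R : realType) (m : nat) (E : {set {set 'I_m.+1}}) (y : 'I_m.+1 -> R) :
  (m < 7)%N -> is_3graph E -> (#|E| <= 28)%N -> (forall i, 0 <= y i) -> \sum_(i < m.+1) y i = 1 ->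
  (forall i j : 'I_m.+1, (i <= j)%N -> y i <= y j) -> lag_poly E y <= 5/54.
Proof.
case: m E y => [|[|[|[|[|[|[|m]]]]]]] E y hm //= h3 hc hpos hsum hmono.
-
  have M := mono_inord hmono.
  rewrite lag_nat // /index_iota /= ?big_cons ?big_nil /=.
  rewrite card_nat // /index_iota /= ?big_cons ?big_nil /= in hc.
  rewrite sum_inord /index_iota /= ?big_cons ?big_nil /= in hsum.
  move: hc; rewrite -(ler_nat R) ?natrD => hcR.
  have p0 := hpos (inord 0).
  have hs7 : 0 + 0 + 0 + 0 + 0 + 0 + y (inord 0) = 1 by lra.
  have K := core7 (lexx 0) (lexx 0) (lexx 0) (lexx 0) (lexx 0) (lexx 0) p0 hs7.
  lra.
-
  have M := mono_inord hmono.
  rewrite lag_nat // /index_iota /= ?big_cons ?big_nil /=.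
  rewrite card_nat // /index_iota /= ?big_cons ?big_nil /= in hc.
  rewrite sum_inord /index_iota /= ?big_cons ?big_nil /= in hsum.
  move: hc; rewrite -(ler_nat R) ?natrD => hcR.
  have p0 := hpos (inord 0).
  have p1 := hpos (inord 1).
  have hs7 : 0 + 0 + 0 + 0 + 0 + y (inord 0) + y (inord 1) = 1 by lra.
  have K := core7 (lexx 0) (lexx 0) (lexx 0) (lexx 0) (lexx 0) p0 p1 hs7.
  lra.
-
  have M := mono_inord hmono.
  rewrite lag_nat // /index_iota /= ?big_cons ?big_nil /=.
  rewrite card_nat // /index_iota /= ?big_cons ?big_nil /= in hc.
  rewrite sum_inord /index_iota /= ?big_cons ?big_nil /= in hsum.
  move: hc; rewrite -(ler_nat R) ?natrD => hcR.
  have p0 := hpos (inord 0).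
  have p1 := hpos (inord 1).
  have p2 := hpos (inord 2).
  have hs7 : 0 + 0 + 0 + 0 + y (inord 0) + y (inord 1) + y (inord 2) = 1 by lra.
  have f012 := term_fact0 ([set inord 0; inord 1; inord 2] \in E) p0 p1 p2.
  have K := core7 (lexx 0) (lexx 0) (lexx 0) (lexx 0) p0 p1 p2 hs7.
  move: hs7 K f012.
  clear -E.
  move: (y (inord 0)) => Y0.
  move: (y (inord 1)) => Y1.
  move: (y (inord 2)) => Y2.
  move: ((nat_of_bool ([set inord 0; inord 1; inord 2] \in E))%:R) => B012.
  move=> hs7 K f012.
  lra.
-
  have M := mono_inord hmono.
  rewrite lag_nat // /index_iota /= ?big_cons ?big_nil /=.
  rewrite card_nat // /index_iota /= ?big_cons ?big_nil /= in hc.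
  rewrite sum_inord /index_iota /= ?big_cons ?big_nil /= in hsum.
  move: hc; rewrite -(ler_nat R) ?natrD => hcR.
  have p0 := hpos (inord 0).
  have p1 := hpos (inord 1).
  have p2 := hpos (inord 2).
  have p3 := hpos (inord 3).
  have hs7 : 0 + 0 + 0 + y (inord 0) + y (inord 1) + y (inord 2) + y (inord 3) = 1 by lra.
  have f012 := term_fact0 ([set inord 0; inord 1; inord 2] \in E) p0 p1 p2.
  have f013 := term_fact0 ([set inord 0; inord 1; inord 3] \in E) p0 p1 p3.
  have f023 := term_fact0 ([set inord 0; inord 2; inord 3] \in E) p0 p2 p3.
  have f123 := term_fact0 ([set inord 1; inord 2; inord 3] \in E) p1 p2 p3.
  have K := core7 (lexx 0) (lexx 0) (lexx 0) p0 p1 p2 p3 hs7.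
  move: hs7 K f012 f013 f023 f123.
  clear -E.
  move: (y (inord 0)) => Y0.
  move: (y (inord 1)) => Y1.
  move: (y (inord 2)) => Y2.
  move: (y (inord 3)) => Y3.
  move: ((nat_of_bool ([set inord 0; inord 1; inord 2] \in E))%:R) => B012.
  move: ((nat_of_bool ([set inord 0; inord 1; inord 3] \in E))%:R) => B013.
  move: ((nat_of_bool ([set inord 0; inord 2; inord 3] \in E))%:R) => B023.
  move: ((nat_of_bool ([set inord 1; inord 2; inord 3] \in E))%:R) => B123.
  move=> hs7 K f012 f013 f023 f123.
  lra.
-
  have M := mono_inord hmono.
  rewrite lag_nat // /index_iota /= ?big_cons ?big_nil /=.
  rewrite card_nat // /index_iota /= ?big_cons ?big_nil /= in hc.
  rewrite sum_inord /index_iota /= ?big_cons ?big_nil /= in hsum.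
  move: hc; rewrite -(ler_nat R) ?natrD => hcR.
  have p0 := hpos (inord 0).
  have p1 := hpos (inord 1).
  have p2 := hpos (inord 2).
  have p3 := hpos (inord 3).
  have p4 := hpos (inord 4).
  have hs7 : 0 + 0 + y (inord 0) + y (inord 1) + y (inord 2) + y (inord 3) + y (inord 4) = 1 by lra.
  have f012 := term_fact0 ([set inord 0; inord 1; inord 2] \in E) p0 p1 p2.
  have f013 := term_fact0 ([set inord 0; inord 1; inord 3] \in E) p0 p1 p3.
  have f014 := term_fact0 ([set inord 0; inord 1; inord 4] \in E) p0 p1 p4.
  have f023 := term_fact0 ([set inord 0; inord 2; inord 3] \in E) p0 p2 p3.
  have f024 := term_fact0 ([set inord 0; inord 2; inord 4] \in E) p0 p2 p4.
  have f034 := term_fact0 ([set inord 0; inord 3; inord 4] \in E) p0 p3 p4.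
  have f123 := term_fact0 ([set inord 1; inord 2; inord 3] \in E) p1 p2 p3.
  have f124 := term_fact0 ([set inord 1; inord 2; inord 4] \in E) p1 p2 p4.
  have f134 := term_fact0 ([set inord 1; inord 3; inord 4] \in E) p1 p3 p4.
  have f234 := term_fact0 ([set inord 2; inord 3; inord 4] \in E) p2 p3 p4.
  have K := core7 (lexx 0) (lexx 0) p0 (M 0 1 erefl erefl) (M 0 2 erefl erefl) (M 0 3 erefl erefl) (M 0 4 erefl erefl) hs7.
  move: hs7 K f012 f013 f014 f023 f024 f034 f123 f124 f134 f234.
  clear -E.
  move: (y (inord 0)) => Y0.
  move: (y (inord 1)) => Y1.
  move: (y (inord 2)) => Y2.
  move: (y (inord 3)) => Y3.
  move: (y (inord 4)) => Y4.
  move: ((nat_of_bool ([set inord 0; inord 1; inord 2] \in E))%:R) => B012.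
  move: ((nat_of_bool ([set inord 0; inord 1; inord 3] \in E))%:R) => B013.
  move: ((nat_of_bool ([set inord 0; inord 1; inord 4] \in E))%:R) => B014.
  move: ((nat_of_bool ([set inord 0; inord 2; inord 3] \in E))%:R) => B023.
  move: ((nat_of_bool ([set inord 0; inord 2; inord 4] \in E))%:R) => B024.
  move: ((nat_of_bool ([set inord 0; inord 3; inord 4] \in E))%:R) => B034.
  move: ((nat_of_bool ([set inord 1; inord 2; inord 3] \in E))%:R) => B123.
  move: ((nat_of_bool ([set inord 1; inord 2; inord 4] \in E))%:R) => B124.
  move: ((nat_of_bool ([set inord 1; inord 3; inord 4] \in E))%:R) => B134.
  move: ((nat_of_bool ([set inord 2; inord 3; inord 4] \in E))%:R) => B234.
  move=> hs7 K f012 f013 f014 f023 f024 f034 f123 f124 f134 f234.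
  lra.
-
  have M := mono_inord hmono.
  rewrite lag_nat // /index_iota /= ?big_cons ?big_nil /=.
  rewrite card_nat // /index_iota /= ?big_cons ?big_nil /= in hc.
  rewrite sum_inord /index_iota /= ?big_cons ?big_nil /= in hsum.
  move: hc; rewrite -(ler_nat R) ?natrD => hcR.
  have p0 := hpos (inord 0).
  have p1 := hpos (inord 1).
  have p2 := hpos (inord 2).
  have p3 := hpos (inord 3).
  have p4 := hpos (inord 4).
  have p5 := hpos (inord 5).
  have hs7 : 0 + y (inord 0) + y (inord 1) + y (inord 2) + y (inord 3) + y (inord 4) + y (inord 5) = 1 by lra.
  have f012 := term_fact0 ([set inord 0; inord 1; inord 2] \in E) p0 p1 p2.
  have f013 := term_fact0 ([set inord 0; inord 1; inord 3] \in E) p0 p1 p3.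
  have f014 := term_fact0 ([set inord 0; inord 1; inord 4] \in E) p0 p1 p4.
  have f015 := term_fact0 ([set inord 0; inord 1; inord 5] \in E) p0 p1 p5.
  have f023 := term_fact0 ([set inord 0; inord 2; inord 3] \in E) p0 p2 p3.
  have f024 := term_fact0 ([set inord 0; inord 2; inord 4] \in E) p0 p2 p4.
  have f025 := term_fact0 ([set inord 0; inord 2; inord 5] \in E) p0 p2 p5.
  have f034 := term_fact0 ([set inord 0; inord 3; inord 4] \in E) p0 p3 p4.
  have f035 := term_fact0 ([set inord 0; inord 3; inord 5] \in E) p0 p3 p5.
  have f045 := term_fact0 ([set inord 0; inord 4; inord 5] \in E) p0 p4 p5.
  have f123 := term_fact0 ([set inord 1; inord 2; inord 3] \in E) p1 p2 p3.
  have f124 := term_fact0 ([set inord 1; inord 2; inord 4] \in E) p1 p2 p4.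
  have f125 := term_fact0 ([set inord 1; inord 2; inord 5] \in E) p1 p2 p5.
  have f134 := term_fact0 ([set inord 1; inord 3; inord 4] \in E) p1 p3 p4.
  have f135 := term_fact0 ([set inord 1; inord 3; inord 5] \in E) p1 p3 p5.
  have f145 := term_fact0 ([set inord 1; inord 4; inord 5] \in E) p1 p4 p5.
  have f234 := term_fact0 ([set inord 2; inord 3; inord 4] \in E) p2 p3 p4.
  have f235 := term_fact0 ([set inord 2; inord 3; inord 5] \in E) p2 p3 p5.
  have f245 := term_fact0 ([set inord 2; inord 4; inord 5] \in E) p2 p4 p5.
  have f345 := term_fact0 ([set inord 3; inord 4; inord 5] \in E) p3 p4 p5.
  have K := core7 (lexx 0) p0 (M 0 1 erefl erefl) (M 1 2 erefl erefl) (M 1 3 erefl erefl) (M 1 4 erefl erefl) (M 1 5 erefl erefl) hs7.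
  move: hs7 K f012 f013 f014 f015 f023 f024 f025 f034 f035 f045 f123 f124 f125 f134 f135 f145 f234 f235 f245 f345.
  clear -E.
  move: (y (inord 0)) => Y0.
  move: (y (inord 1)) => Y1.
  move: (y (inord 2)) => Y2.
  move: (y (inord 3)) => Y3.
  move: (y (inord 4)) => Y4.
  move: (y (inord 5)) => Y5.
  move: ((nat_of_bool ([set inord 0; inord 1; inord 2] \in E))%:R) => B012.
  move: ((nat_of_bool ([set inord 0; inord 1; inord 3] \in E))%:R) => B013.
  move: ((nat_of_bool ([set inord 0; inord 1; inord 4] \in E))%:R) => B014.
  move: ((nat_of_bool ([set inord 0; inord 1; inord 5] \in E))%:R) => B015.
  move: ((nat_of_bool ([set inord 0; inord 2; inord 3] \in E))%:R) => B023.
  move: ((nat_of_bool ([set inord 0; inord 2; inord 4] \in E))%:R) => B024.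
  move: ((nat_of_bool ([set inord 0; inord 2; inord 5] \in E))%:R) => B025.
  move: ((nat_of_bool ([set inord 0; inord 3; inord 4] \in E))%:R) => B034.
  move: ((nat_of_bool ([set inord 0; inord 3; inord 5] \in E))%:R) => B035.
  move: ((nat_of_bool ([set inord 0; inord 4; inord 5] \in E))%:R) => B045.
  move: ((nat_of_bool ([set inord 1; inord 2; inord 3] \in E))%:R) => B123.
  move: ((nat_of_bool ([set inord 1; inord 2; inord 4] \in E))%:R) => B124.
  move: ((nat_of_bool ([set inord 1; inord 2; inord 5] \in E))%:R) => B125.
  move: ((nat_of_bool ([set inord 1; inord 3; inord 4] \in E))%:R) => B134.
  move: ((nat_of_bool ([set inord 1; inord 3; inord 5] \in E))%:R) => B135.
  move: ((nat_of_bool ([set inord 1; inord 4; inord 5] \in E))%:R) => B145.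
  move: ((nat_of_bool ([set inord 2; inord 3; inord 4] \in E))%:R) => B234.
  move: ((nat_of_bool ([set inord 2; inord 3; inord 5] \in E))%:R) => B235.
  move: ((nat_of_bool ([set inord 2; inord 4; inord 5] \in E))%:R) => B245.
  move: ((nat_of_bool ([set inord 3; inord 4; inord 5] \in E))%:R) => B345.
  move=> hs7 K f012 f013 f014 f015 f023 f024 f025 f034 f035 f045 f123 f124 f125 f134 f135 f145 f234 f235 f245 f345.
  lra.
-
  have M := mono_inord hmono.
  rewrite lag_nat // /index_iota /= ?big_cons ?big_nil /=.
  rewrite card_nat // /index_iota /= ?big_cons ?big_nil /= in hc.
  rewrite sum_inord /index_iota /= ?big_cons ?big_nil /= in hsum.
  move: hc; rewrite -(ler_nat R) ?natrD => hcR.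
  have p0 := hpos (inord 0).
  have p1 := hpos (inord 1).
  have p2 := hpos (inord 2).
  have p3 := hpos (inord 3).
  have p4 := hpos (inord 4).
  have p5 := hpos (inord 5).
  have p6 := hpos (inord 6).
  have hs7 : y (inord 0) + y (inord 1) + y (inord 2) + y (inord 3) + y (inord 4) + y (inord 5) + y (inord 6) = 1 by lra.
  have f012 := term_fact ([set inord 0; inord 1; inord 2] \in E) p0 (M 0 0 erefl erefl) p1 (M 1 1 erefl erefl) p2 (M 2 2 erefl erefl).
  have f013 := term_fact ([set inord 0; inord 1; inord 3] \in E) p0 (M 0 0 erefl erefl) p1 (M 1 1 erefl erefl) p2 (M 2 3 erefl erefl).
  have f014 := term_fact ([set inord 0; inord 1; inord 4] \in E) p0 (M 0 0 erefl erefl) p1 (M 1 1 erefl erefl) p2 (M 2 4 erefl erefl).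
  have f015 := term_fact ([set inord 0; inord 1; inord 5] \in E) p0 (M 0 0 erefl erefl) p1 (M 1 1 erefl erefl) p2 (M 2 5 erefl erefl).
  have f016 := term_fact ([set inord 0; inord 1; inord 6] \in E) p0 (M 0 0 erefl erefl) p1 (M 1 1 erefl erefl) p2 (M 2 6 erefl erefl).
  have f023 := term_fact ([set inord 0; inord 2; inord 3] \in E) p0 (M 0 0 erefl erefl) p1 (M 1 2 erefl erefl) p2 (M 2 3 erefl erefl).
  have f024 := term_fact ([set inord 0; inord 2; inord 4] \in E) p0 (M 0 0 erefl erefl) p1 (M 1 2 erefl erefl) p2 (M 2 4 erefl erefl).
  have f025 := term_fact ([set inord 0; inord 2; inord 5] \in E) p0 (M 0 0 erefl erefl) p1 (M 1 2 erefl erefl) p2 (M 2 5 erefl erefl).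
  have f026 := term_fact ([set inord 0; inord 2; inord 6] \in E) p0 (M 0 0 erefl erefl) p1 (M 1 2 erefl erefl) p2 (M 2 6 erefl erefl).
  have f034 := term_fact ([set inord 0; inord 3; inord 4] \in E) p0 (M 0 0 erefl erefl) p1 (M 1 3 erefl erefl) p2 (M 2 4 erefl erefl).
  have f035 := term_fact ([set inord 0; inord 3; inord 5] \in E) p0 (M 0 0 erefl erefl) p1 (M 1 3 erefl erefl) p2 (M 2 5 erefl erefl).
  have f036 := term_fact ([set inord 0; inord 3; inord 6] \in E) p0 (M 0 0 erefl erefl) p1 (M 1 3 erefl erefl) p2 (M 2 6 erefl erefl).
  have f045 := term_fact ([set inord 0; inord 4; inord 5] \in E) p0 (M 0 0 erefl erefl) p1 (M 1 4 erefl erefl) p2 (M 2 5 erefl erefl).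
  have f046 := term_fact ([set inord 0; inord 4; inord 6] \in E) p0 (M 0 0 erefl erefl) p1 (M 1 4 erefl erefl) p2 (M 2 6 erefl erefl).
  have f056 := term_fact ([set inord 0; inord 5; inord 6] \in E) p0 (M 0 0 erefl erefl) p1 (M 1 5 erefl erefl) p2 (M 2 6 erefl erefl).
  have f123 := term_fact ([set inord 1; inord 2; inord 3] \in E) p0 (M 0 1 erefl erefl) p1 (M 1 2 erefl erefl) p2 (M 2 3 erefl erefl).
  have f124 := term_fact ([set inord 1; inord 2; inord 4] \in E) p0 (M 0 1 erefl erefl) p1 (M 1 2 erefl erefl) p2 (M 2 4 erefl erefl).
  have f125 := term_fact ([set inord 1; inord 2; inord 5] \in E) p0 (M 0 1 erefl erefl) p1 (M 1 2 erefl erefl) p2 (M 2 5 erefl erefl).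
  have f126 := term_fact ([set inord 1; inord 2; inord 6] \in E) p0 (M 0 1 erefl erefl) p1 (M 1 2 erefl erefl) p2 (M 2 6 erefl erefl).
  have f134 := term_fact ([set inord 1; inord 3; inord 4] \in E) p0 (M 0 1 erefl erefl) p1 (M 1 3 erefl erefl) p2 (M 2 4 erefl erefl).
  have f135 := term_fact ([set inord 1; inord 3; inord 5] \in E) p0 (M 0 1 erefl erefl) p1 (M 1 3 erefl erefl) p2 (M 2 5 erefl erefl).
  have f136 := term_fact ([set inord 1; inord 3; inord 6] \in E) p0 (M 0 1 erefl erefl) p1 (M 1 3 erefl erefl) p2 (M 2 6 erefl erefl).
  have f145 := term_fact ([set inord 1; inord 4; inord 5] \in E) p0 (M 0 1 erefl erefl) p1 (M 1 4 erefl erefl) p2 (M 2 5 erefl erefl).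
  have f146 := term_fact ([set inord 1; inord 4; inord 6] \in E) p0 (M 0 1 erefl erefl) p1 (M 1 4 erefl erefl) p2 (M 2 6 erefl erefl).
  have f156 := term_fact ([set inord 1; inord 5; inord 6] \in E) p0 (M 0 1 erefl erefl) p1 (M 1 5 erefl erefl) p2 (M 2 6 erefl erefl).
  have f234 := term_fact ([set inord 2; inord 3; inord 4] \in E) p0 (M 0 2 erefl erefl) p1 (M 1 3 erefl erefl) p2 (M 2 4 erefl erefl).
  have f235 := term_fact ([set inord 2; inord 3; inord 5] \in E) p0 (M 0 2 erefl erefl) p1 (M 1 3 erefl erefl) p2 (M 2 5 erefl erefl).
  have f236 := term_fact ([set inord 2; inord 3; inord 6] \in E) p0 (M 0 2 erefl erefl) p1 (M 1 3 erefl erefl) p2 (M 2 6 erefl erefl).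
  have f245 := term_fact ([set inord 2; inord 4; inord 5] \in E) p0 (M 0 2 erefl erefl) p1 (M 1 4 erefl erefl) p2 (M 2 5 erefl erefl).
  have f246 := term_fact ([set inord 2; inord 4; inord 6] \in E) p0 (M 0 2 erefl erefl) p1 (M 1 4 erefl erefl) p2 (M 2 6 erefl erefl).
  have f256 := term_fact ([set inord 2; inord 5; inord 6] \in E) p0 (M 0 2 erefl erefl) p1 (M 1 5 erefl erefl) p2 (M 2 6 erefl erefl).
  have f345 := term_fact ([set inord 3; inord 4; inord 5] \in E) p0 (M 0 3 erefl erefl) p1 (M 1 4 erefl erefl) p2 (M 2 5 erefl erefl).
  have f346 := term_fact ([set inord 3; inord 4; inord 6] \in E) p0 (M 0 3 erefl erefl) p1 (M 1 4 erefl erefl) p2 (M 2 6 erefl erefl).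
  have f356 := term_fact ([set inord 3; inord 5; inord 6] \in E) p0 (M 0 3 erefl erefl) p1 (M 1 5 erefl erefl) p2 (M 2 6 erefl erefl).
  have f456 := term_fact ([set inord 4; inord 5; inord 6] \in E) p0 (M 0 4 erefl erefl) p1 (M 1 5 erefl erefl) p2 (M 2 6 erefl erefl).
  have gm := mul_le28 hcR (mulr_ge0 (mulr_ge0 p0 p1) p2).
  have K := core7 p0 (M 0 1 erefl erefl) (M 1 2 erefl erefl) (M 2 3 erefl erefl) (M 2 4 erefl erefl) (M 2 5 erefl erefl) (M 2 6 erefl erefl) hs7.
  move: hs7 K f012 f013 f014 f015 f016 f023 f024 f025 f026 f034 f035 f036 f045 f046 f056 f123 f124 f125 f126 f134 f135 f136 f145 f146 f156 f234 f235 f236 f245 f246 f256 f345 f346 f356 f456 gm.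
  clear -E.
  move: (y (inord 0)) => Y0.
  move: (y (inord 1)) => Y1.
  move: (y (inord 2)) => Y2.
  move: (y (inord 3)) => Y3.
  move: (y (inord 4)) => Y4.
  move: (y (inord 5)) => Y5.
  move: (y (inord 6)) => Y6.
  move: ((nat_of_bool ([set inord 0; inord 1; inord 2] \in E))%:R) => B012.
  move: ((nat_of_bool ([set inord 0; inord 1; inord 3] \in E))%:R) => B013.
  move: ((nat_of_bool ([set inord 0; inord 1; inord 4] \in E))%:R) => B014.
  move: ((nat_of_bool ([set inord 0; inord 1; inord 5] \in E))%:R) => B015.
  move: ((nat_of_bool ([set inord 0; inord 1; inord 6] \in E))%:R) => B016.
  move: ((nat_of_bool ([set inord 0; inord 2; inord 3] \in E))%:R) => B023.
  move: ((nat_of_bool ([set inord 0; inord 2; inord 4] \in E))%:R) => B024.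
  move: ((nat_of_bool ([set inord 0; inord 2; inord 5] \in E))%:R) => B025.
  move: ((nat_of_bool ([set inord 0; inord 2; inord 6] \in E))%:R) => B026.
  move: ((nat_of_bool ([set inord 0; inord 3; inord 4] \in E))%:R) => B034.
  move: ((nat_of_bool ([set inord 0; inord 3; inord 5] \in E))%:R) => B035.
  move: ((nat_of_bool ([set inord 0; inord 3; inord 6] \in E))%:R) => B036.
  move: ((nat_of_bool ([set inord 0; inord 4; inord 5] \in E))%:R) => B045.
  move: ((nat_of_bool ([set inord 0; inord 4; inord 6] \in E))%:R) => B046.
  move: ((nat_of_bool ([set inord 0; inord 5; inord 6] \in E))%:R) => B056.
  move: ((nat_of_bool ([set inord 1; inord 2; inord 3] \in E))%:R) => B123.
  move: ((nat_of_bool ([set inord 1; inord 2; inord 4] \in E))%:R) => B124.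
  move: ((nat_of_bool ([set inord 1; inord 2; inord 5] \in E))%:R) => B125.
  move: ((nat_of_bool ([set inord 1; inord 2; inord 6] \in E))%:R) => B126.
  move: ((nat_of_bool ([set inord 1; inord 3; inord 4] \in E))%:R) => B134.
  move: ((nat_of_bool ([set inord 1; inord 3; inord 5] \in E))%:R) => B135.
  move: ((nat_of_bool ([set inord 1; inord 3; inord 6] \in E))%:R) => B136.
  move: ((nat_of_bool ([set inord 1; inord 4; inord 5] \in E))%:R) => B145.
  move: ((nat_of_bool ([set inord 1; inord 4; inord 6] \in E))%:R) => B146.
  move: ((nat_of_bool ([set inord 1; inord 5; inord 6] \in E))%:R) => B156.
  move: ((nat_of_bool ([set inord 2; inord 3; inord 4] \in E))%:R) => B234.
  move: ((nat_of_bool ([set inord 2; inord 3; inord 5] \in E))%:R) => B235.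
  move: ((nat_of_bool ([set inord 2; inord 3; inord 6] \in E))%:R) => B236.
  move: ((nat_of_bool ([set inord 2; inord 4; inord 5] \in E))%:R) => B245.
  move: ((nat_of_bool ([set inord 2; inord 4; inord 6] \in E))%:R) => B246.
  move: ((nat_of_bool ([set inord 2; inord 5; inord 6] \in E))%:R) => B256.
  move: ((nat_of_bool ([set inord 3; inord 4; inord 5] \in E))%:R) => B345.
  move: ((nat_of_bool ([set inord 3; inord 4; inord 6] \in E))%:R) => B346.
  move: ((nat_of_bool ([set inord 3; inord 5; inord 6] \in E))%:R) => B356.
  move: ((nat_of_bool ([set inord 4; inord 5; inord 6] \in E))%:R) => B456.
  move=> hs7 K f012 f013 f014 f015 f016 f023 f024 f025 f026 f034 f035 f036 f045 f046 f056 f123 f124 f125 f126 f134 f135 f136 f145 f146 f156 f234 f235 f236 f245 f246 f256 f345 f346 f356 f456 gm.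
  lra.
Qed.

Lemma sqrt3_bound (R : realType) : 5/54 < Num.sqrt (3 : R) / 18.
Proof.
have h : 5/3 < Num.sqrt (3 : R).
  have e : (5/3 : R) = Num.sqrt ((5/3) ^+ 2).
    rewrite sqrtr_sqr ger0_norm //; lra.
  rewrite e ltr_sqrt //; rewrite expr2; lra.
lra.
Qed.

Lemma card_small n (E : {set {set 'I_n}}) : is_3graph E -> (n <= 6)%N -> (#|E| <= 28)%N.
Proof.
move=> h3 hn.
have sub : E \subset [set A : {set 'I_n} | #|A| == 3%N].
  by apply/fintype.subsetP => e he; rewrite inE h3.
apply: leq_trans (subset_leq_card sub) _.
rewrite card_draws card_ord.
by apply: leq_trans (leq_bin2l 3 hn) _.
Qed.

End Aux.
Import Aux.

Theorem claim5p6 (R : realType) (n : nat) (E : {set {set 'I_n}}) :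
  is_3graph E -> @dense R n E -> K43e_free E ->
  @lagrangian R n E > Num.sqrt (3 : R) / 18 ->
  (8 <= n)%N.
Proof.
move=> h3 _ hfree hlag.
rewrite leqNgt; apply/negP => hn.
have hc : (#|E| <= 28)%N.
  case: (leqP n 6) => h6; first exact: card_small h3 h6.
  have e7 : n = 7%N by apply/eqP; rewrite eqn_leq -ltnS hn h6.
  subst n; exact: K43e_card.
move: hlag; rewrite /lagrangian /lagrangian_on => hlag.
set S := [set _ | _ in _]%classic in hlag.
have [ne|emp] := pselect (S !=set0)%classic; last first.
  have S0 : S = set0.
    by rewrite predeqE => z; split => // Sz; apply: emp; exists z.
  move: hlag; rewrite S0 sup0 => hlag.
  have : 0 < Num.sqrt (3 : R) / 18 by rewrite divr_gt0 // sqrtr_gt0.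
  by rewrite ltNge (ltW hlag).
have [_ [x [hpos [_ hsum]] <-] hx] := sup_gt ne hlag.
have [s hs] := sort_perm x.
have [hl [hcE h3']] := relabel E x s.
case: n E x h3 hfree hn hc S hlag ne hpos hsum s hs hl hcE h3' hx => [|m] E x h3 hfree hn hc S hlag ne hpos hsum s hs hl hcE h3' hx.
  by move: hsum; rewrite big_ord0 => /eqP; rewrite eq_sym oner_eq0.
have hsum' : \sum_(i < m.+1) x (s i) = 1 by rewrite -hsum [RHS](reindex_inj (@perm_inj _ s)).
have hc' : (#|relab s E| <= 28)%N by rewrite hcE.
have K := core (m:=m) (y := fun i => x (s i)) hn (h3' h3) hc' (fun i => hpos (s i)) hsum' hs.
have B := sqrt3_bound R.
rewrite hl in hx.
lra.
Qed.
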